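(* Let $T^{(0)},T^{(1)}$ be closed tetrahedra with vertices $P^{(0)}_1,\dots,P^{(0)}_4$ and $P^{(1)}_1,\dots,P^{(1)}_4$ respectively. Then $$d_{\mathcal H}(T^{(0)},T^{(1)})\le\min_{\wp}\max_{1\le i\le4}|P^{(0)}_i-P^{(1)}_{\wp(i)}|,$$ where the minimum runs over permutations $\wp$ of $\{1,2,3,4\}$. Moreover, if both $T^{(0)},T^{(1)}$ are contained in $B_R(0)$ and have inradius greater than $r_1>0$, there is a constant $A_1>0$ depending only on $R$ and $r_1$ such that $$\min_{\wp}\max_{1\le i\le4}|P^{(0)}_i-P^{(1)}_{\wp(i)}|\le A_1\,d_{\mathcal H}(T^{(0)},T^{(1)}).$$
   Context: $d_{\mathcal H}$ denotes the Hausdorff distance between compact subsets of $\mathbb{R}^3$; $B_R(0)$ is the open ball of radius $R$ centered at the origin. *)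

(* Defs.v *)
From Stdlib Require Import Reals Lra.
Open Scope R_scope.

Definition pt : Type := (R * R * R)%type.

Definition px (p : pt) : R := fst (fst p).
Definition py (p : pt) : R := snd (fst p).
Definition pz (p : pt) : R := snd p.

Definition dist3 (p q : pt) : R :=
  sqrt ((px p - px q) ^ 2 + (py p - py q) ^ 2 + (pz p - pz q) ^ 2).
Definition norm3 (p : pt) : R := sqrt (px p ^ 2 + py p ^ 2 + pz p ^ 2).

(* Vertices of a tetrahedron are indexed by 0,1,2,3 (i.e. 1..4 of the paper). *)
Definition vertices := nat -> pt.

Definition tetra (P : vertices) (x : pt) : Prop :=
  exists l : nat -> R,
    (forall i, (i < 4)%nat -> 0 <= l i) /\
    l 0%nat + l 1%nat + l 2%nat + l 3%nat = 1 /\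
    px x = l 0%nat * px (P 0%nat) + l 1%nat * px (P 1%nat)
         + l 2%nat * px (P 2%nat) + l 3%nat * px (P 3%nat) /\
    py x = l 0%nat * py (P 0%nat) + l 1%nat * py (P 1%nat)
         + l 2%nat * py (P 2%nat) + l 3%nat * py (P 3%nat) /\
    pz x = l 0%nat * pz (P 0%nat) + l 1%nat * pz (P 1%nat)
         + l 2%nat * pz (P 2%nat) + l 3%nat * pz (P 3%nat).

Definition det3 (u v w : pt) : R :=
  px u * (py v * pz w - pz v * py w)
  - py u * (px v * pz w - pz v * px w)
  + pz u * (px v * py w - py v * px w).

Definition vsub (p q : pt) : pt := (px p - px q, py p - py q, pz p - pz q).

Definition nondegenerate (P : vertices) : Prop :=
  det3 (vsub (P 1%nat) (P 0%nat)) (vsub (P 2%nat) (P 0%nat))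
       (vsub (P 3%nat) (P 0%nat)) <> 0.

Definition is_glb (E : R -> Prop) (m : R) : Prop :=
  (forall x, E x -> m <= x) /\ (forall b, (forall x, E x -> b <= x) -> b <= m).

Definition is_hausdorff_dist (A B : pt -> Prop) (d : R) : Prop :=
  is_glb (fun eps => 0 <= eps /\
            (forall a, A a -> exists b, B b /\ dist3 a b <= eps) /\
            (forall b, B b -> exists a, A a /\ dist3 a b <= eps)) d.

Definition is_inradius (A : pt -> Prop) (r : R) : Prop :=
  is_lub (fun rho => 0 <= rho /\ exists c : pt,
            forall x, dist3 x c <= rho -> A x) r.

Definition perm4 (s : nat -> nat) : Prop :=
  (forall i, (i < 4)%nat -> (s i < 4)%nat) /\
  (forall i j, (i < 4)%nat -> (j < 4)%nat -> s i = s j -> i = j).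

Definition maxdev (P0 P1 : vertices) (s : nat -> nat) : R :=
  Rmax (Rmax (dist3 (P0 0%nat) (P1 (s 0%nat))) (dist3 (P0 1%nat) (P1 (s 1%nat))))
       (Rmax (dist3 (P0 2%nat) (P1 (s 2%nat))) (dist3 (P0 3%nat) (P1 (s 3%nat)))).

Definition is_vertex_match_dist (P0 P1 : vertices) (m : R) : Prop :=
  (exists s, perm4 s /\ maxdev P0 P1 s = m) /\
  (forall s, perm4 s -> m <= maxdev P0 P1 s).

(* Main.v *)
Require Import Defs.
From Stdlib Require Import Reals Lra Lia Psatz Classical.
Open Scope R_scope.

Definition N3 (x y z : R) := sqrt (x^2+y^2+z^2).

Lemma N3_nonneg x y z : 0 <= N3 x y z.
Proof. unfold N3; apply sqrt_pos. Qed.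

Lemma N3_scale c x y z : N3 (c*x) (c*y) (c*z) = Rabs c * N3 x y z.
Proof.
  unfold N3. replace ((c*x)^2+(c*y)^2+(c*z)^2) with (c^2 * (x^2+y^2+z^2)) by ring.
  rewrite sqrt_mult_alt by nra. rewrite <- pow2_abs, sqrt_pow2 by apply Rabs_pos. reflexivity.
Qed.

Lemma N3_tri x1 y1 z1 x2 y2 z2 :
  N3 (x1+x2) (y1+y2) (z1+z2) <= N3 x1 y1 z1 + N3 x2 y2 z2.
Proof.
  unfold N3.
  set (A := x1^2+y1^2+z1^2). set (B := x2^2+y2^2+z2^2).
  set (dt := x1*x2+y1*y2+z1*z2).
  assert (HA : 0 <= A) by (unfold A; nra).
  assert (HB : 0 <= B) by (unfold B; nra).
  assert (Hd : dt <= sqrt A * sqrt B).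
  { destruct (Rle_dec dt 0).
    - pose proof (sqrt_pos A); pose proof (sqrt_pos B); nra.
    - rewrite <- sqrt_mult_alt by auto.
      rewrite <- (sqrt_pow2 dt) by lra. apply sqrt_le_1_alt.
      unfold A, B, dt.
      assert (E: (x1^2+y1^2+z1^2)*(x2^2+y2^2+z2^2) - (x1*x2+y1*y2+z1*z2)^2 =
        (x1*y2-y1*x2)^2 + (x1*z2-z1*x2)^2 + (y1*z2-z1*y2)^2) by ring.
      pose proof (pow2_ge_0 (x1*y2-y1*x2)); pose proof (pow2_ge_0 (x1*z2-z1*x2));
      pose proof (pow2_ge_0 (y1*z2-z1*y2)); lra. }
  pose proof (sqrt_pos A); pose proof (sqrt_pos B).
  rewrite <- (sqrt_pow2 (sqrt A + sqrt B)) by lra.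
  apply sqrt_le_1_alt.
  replace ((sqrt A + sqrt B)^2) with (sqrt A * sqrt A + sqrt B * sqrt B + 2 * (sqrt A * sqrt B)) by ring.
  rewrite !sqrt_sqrt by auto.
  unfold A, B, dt in *. nra.
Qed.

Definition Dt (P:vertices) := det3 (vsub (P 1%nat) (P 0%nat)) (vsub (P 2%nat) (P 0%nat)) (vsub (P 3%nat) (P 0%nat)).
Definition bc (P : vertices) (k : nat) (x : pt) : R :=
  let e1 := vsub (P 1%nat) (P 0%nat) in let e2 := vsub (P 2%nat) (P 0%nat) in
  let e3 := vsub (P 3%nat) (P 0%nat) in let w := vsub x (P 0%nat) in
  match k with
  | 0%nat => 1 - (det3 w e2 e3 + det3 e1 w e3 + det3 e1 e2 w) / Dt P
  | 1%nat => det3 w e2 e3 / Dt P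
  | 2%nat => det3 e1 w e3 / Dt P
  | _ => det3 e1 e2 w / Dt P end.

Lemma bc_comb (P Q : vertices) (mu : nat -> R) (x : pt) k :
  nondegenerate P -> mu 0%nat + mu 1%nat + mu 2%nat + mu 3%nat = 1 ->
  px x = mu 0%nat * px (Q 0%nat) + mu 1%nat * px (Q 1%nat) + mu 2%nat * px (Q 2%nat) + mu 3%nat * px (Q 3%nat) ->
  py x = mu 0%nat * py (Q 0%nat) + mu 1%nat * py (Q 1%nat) + mu 2%nat * py (Q 2%nat) + mu 3%nat * py (Q 3%nat) ->
  pz x = mu 0%nat * pz (Q 0%nat) + mu 1%nat * pz (Q 1%nat) + mu 2%nat * pz (Q 2%nat) + mu 3%nat * pz (Q 3%nat) ->
  bc P k x = mu 0%nat * bc P k (Q 0%nat) + mu 1%nat * bc P k (Q 1%nat) + mu 2%nat * bc P k (Q 2%nat) + mu 3%nat * bc P k (Q 3%nat).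
Proof.
  intros HD Hs Hx Hy Hz. unfold nondegenerate in HD. fold (Dt P) in HD.
  assert (E0: mu 0%nat = 1 - mu 1%nat - mu 2%nat - mu 3%nat) by lra.
  rewrite E0 in Hx, Hy, Hz. rewrite E0.
  destruct k as [|[|[|k]]]; unfold bc; unfold det3, vsub;
  rewrite Hx, Hy, Hz; unfold px, py, pz; simpl; field; auto.
Qed.

Lemma bc_vert (P : vertices) k j : nondegenerate P -> (k < 4)%nat -> (j < 4)%nat ->
  bc P k (P j) = if Nat.eq_dec k j then 1 else 0.
Proof.
  intros HD Hk Hj. unfold nondegenerate in HD. fold (Dt P) in HD.
  destruct k as [|[|[|[|k]]]]; try lia; destruct j as [|[|[|[|j]]]]; try lia;
  (destruct (Nat.eq_dec _ _) as [e|e]; [try discriminate e | try (exfalso; lia)]);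
  unfold bc, Dt in *; unfold det3, vsub in *; unfold px, py, pz in *; simpl in *; field; auto.
Qed.

Lemma bc_recon (P : vertices) x : nondegenerate P ->
  px x = bc P 0 x * px (P 0%nat) + bc P 1 x * px (P 1%nat) + bc P 2 x * px (P 2%nat) + bc P 3 x * px (P 3%nat) /\
  py x = bc P 0 x * py (P 0%nat) + bc P 1 x * py (P 1%nat) + bc P 2 x * py (P 2%nat) + bc P 3 x * py (P 3%nat) /\
  pz x = bc P 0 x * pz (P 0%nat) + bc P 1 x * pz (P 1%nat) + bc P 2 x * pz (P 2%nat) + bc P 3 x * pz (P 3%nat).
Proof.
  intros HD. unfold nondegenerate in HD. fold (Dt P) in HD.
  unfold bc, Dt in *; unfold det3, vsub in *; unfold px, py, pz in *; simpl in *.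
  repeat split; field; auto.
Qed.

Lemma bc_sum P x : bc P 0 x + bc P 1 x + bc P 2 x + bc P 3 x = 1.
Proof. unfold bc. simpl. lra. Qed.

Lemma tetra_bc P x k : nondegenerate P -> (k < 4)%nat -> tetra P x -> 0 <= bc P k x <= 1.
Proof.
  intros HD Hk [l [Hl [Hs [Hx [Hy Hz]]]]].
  rewrite (bc_comb P P l x k HD Hs Hx Hy Hz).
  rewrite !bc_vert by (auto; lia).
  pose proof (Hl 0%nat ltac:(lia)); pose proof (Hl 1%nat ltac:(lia));
  pose proof (Hl 2%nat ltac:(lia)); pose proof (Hl 3%nat ltac:(lia)).
  destruct k as [|[|[|[|k]]]]; try lia; simpl;
  repeat (destruct (Nat.eq_dec _ _); try lia); lra.
Qed.

Definition shift (c : pt) (s : R) (x y : pt) : pt :=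
  (px c + s*(px x - px y), py c + s*(py x - py y), pz c + s*(pz x - pz y)).

Lemma bc_shift P k c s x y : nondegenerate P ->
  bc P k (shift c s x y) - bc P k (shift c (-s) x y) = 2*s*(bc P k x - bc P k y).
Proof.
  intros HD. unfold nondegenerate in HD. fold (Dt P) in HD.
  destruct k as [|[|[|k]]]; unfold bc, shift; unfold det3, vsub; unfold px, py, pz; simpl;
  field; auto.
Qed.

Lemma dist3_N3 a b : dist3 a b = N3 (px a - px b) (py a - py b) (pz a - pz b).
Proof. reflexivity. Qed.

Lemma dist_shift c s x y : dist3 (shift c s x y) c = Rabs s * dist3 x y.
Proof.
  rewrite !dist3_N3, <- N3_scale. unfold shift, px, py, pz; simpl. f_equal; ring.
Qed.

Lemma dist3_pos a b : 0 <= dist3 a b.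
Proof. apply sqrt_pos. Qed.

Lemma dist3_zero a b : dist3 a b = 0 -> a = b.
Proof.
  destruct a as [[a1 a2] a3], b as [[b1 b2] b3]. unfold dist3, px, py, pz; simpl.
  intro H. pose proof (pow2_ge_0 (a1-b1)); pose proof (pow2_ge_0 (a2-b2)); pose proof (pow2_ge_0 (a3-b3)).
  apply sqrt_eq_0 in H; [|lra].
  assert ((a1-b1)^2 = 0) as K1 by lra. assert ((a2-b2)^2 = 0) as K2 by lra. assert ((a3-b3)^2 = 0) as K3 by lra.
  assert (a1 = b1) by (destruct (Req_dec (a1-b1) 0); [lra| exfalso; apply (pow_nonzero (a1-b1) 2); auto]). assert (a2 = b2) by (destruct (Req_dec (a2-b2) 0); [lra| exfalso; apply (pow_nonzero (a2-b2) 2); auto]). assert (a3 = b3) by (destruct (Req_dec (a3-b3) 0); [lra| exfalso; apply (pow_nonzero (a3-b3) 2); auto]). subst; auto.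
Qed.

Lemma bc_lip P c rho k x y : nondegenerate P -> (k < 4)%nat -> 0 < rho ->
  (forall z, dist3 z c <= rho -> tetra P z) ->
  Rabs (bc P k x - bc P k y) <= dist3 x y / (2*rho).
Proof.
  intros HD Hk Hr Hb.
  pose proof (dist3_pos x y) as Hd0.
  destruct (Req_dec (dist3 x y) 0) as [E|E].
  { apply dist3_zero in E; subst. rewrite Rminus_diag, Rabs_R0. apply Rmult_le_pos; auto.
    apply Rlt_le, Rinv_0_lt_compat; lra. }
  set (d := dist3 x y) in *.
  set (s := rho / d).
  assert (Hs : 0 < s) by (unfold s; apply Rdiv_lt_0_compat; lra).
  assert (H1 : 0 <= bc P k (shift c s x y) <= 1).
  { apply tetra_bc; auto. apply Hb. rewrite dist_shift. rewrite Rabs_pos_eq by lra.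
    unfold s, d. right. field. auto. }
  assert (H2 : 0 <= bc P k (shift c (-s) x y) <= 1).
  { apply tetra_bc; auto. apply Hb. rewrite dist_shift. rewrite Rabs_Ropp, Rabs_pos_eq by lra.
    unfold s, d. right. field. auto. }
  pose proof (bc_shift P k c s x y HD) as E2.
  set (g := bc P k x - bc P k y) in *.
  assert (Hg : Rabs (2 * s * g) <= 1) by (apply Rabs_le; lra).
  rewrite Rabs_mult, (Rabs_pos_eq (2*s)) in Hg by lra.
  apply (Rmult_le_reg_l (2*s)); [lra|].
  replace (2 * s * (d / (2 * rho))) with 1 by (unfold s; field; lra). lra.
Qed.

Lemma N3_sum4 (c a b d : nat -> R) :
  N3 (c 0%nat * a 0%nat + c 1%nat * a 1%nat + c 2%nat * a 2%nat + c 3%nat * a 3%nat)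
     (c 0%nat * b 0%nat + c 1%nat * b 1%nat + c 2%nat * b 2%nat + c 3%nat * b 3%nat)
     (c 0%nat * d 0%nat + c 1%nat * d 1%nat + c 2%nat * d 2%nat + c 3%nat * d 3%nat)
  <= Rabs (c 0%nat) * N3 (a 0%nat) (b 0%nat) (d 0%nat) + Rabs (c 1%nat) * N3 (a 1%nat) (b 1%nat) (d 1%nat)
   + Rabs (c 2%nat) * N3 (a 2%nat) (b 2%nat) (d 2%nat) + Rabs (c 3%nat) * N3 (a 3%nat) (b 3%nat) (d 3%nat).
Proof.
  rewrite <- !N3_scale.
  eapply Rle_trans; [apply N3_tri|].
  apply Rplus_le_compat_r. eapply Rle_trans; [apply N3_tri|].
  apply Rplus_le_compat_r. apply N3_tri.
Qed.

Lemma conv_dist (P Rv : vertices) (c : nat -> R) a b :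
  (forall i, (i<4)%nat -> 0 <= c i) ->
  px a = c 0%nat * px (P 0%nat) + c 1%nat * px (P 1%nat) + c 2%nat * px (P 2%nat) + c 3%nat * px (P 3%nat) ->
  py a = c 0%nat * py (P 0%nat) + c 1%nat * py (P 1%nat) + c 2%nat * py (P 2%nat) + c 3%nat * py (P 3%nat) ->
  pz a = c 0%nat * pz (P 0%nat) + c 1%nat * pz (P 1%nat) + c 2%nat * pz (P 2%nat) + c 3%nat * pz (P 3%nat) ->
  px b = c 0%nat * px (Rv 0%nat) + c 1%nat * px (Rv 1%nat) + c 2%nat * px (Rv 2%nat) + c 3%nat * px (Rv 3%nat) ->
  py b = c 0%nat * py (Rv 0%nat) + c 1%nat * py (Rv 1%nat) + c 2%nat * py (Rv 2%nat) + c 3%nat * py (Rv 3%nat) ->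
  pz b = c 0%nat * pz (Rv 0%nat) + c 1%nat * pz (Rv 1%nat) + c 2%nat * pz (Rv 2%nat) + c 3%nat * pz (Rv 3%nat) ->
  dist3 a b <= c 0%nat * dist3 (P 0%nat) (Rv 0%nat) + c 1%nat * dist3 (P 1%nat) (Rv 1%nat)
             + c 2%nat * dist3 (P 2%nat) (Rv 2%nat) + c 3%nat * dist3 (P 3%nat) (Rv 3%nat).
Proof.
  intros Hc H1 H2 H3 H4 H5 H6.
  rewrite dist3_N3, H1, H2, H3, H4, H5, H6.
  pose proof (N3_sum4 c (fun i => px (P i) - px (Rv i)) (fun i => py (P i) - py (Rv i))
                       (fun i => pz (P i) - pz (Rv i))) as K.
  simpl in K.
  rewrite !(Rabs_pos_eq (c _)) in K by (apply Hc; lia).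
  rewrite !dist3_N3.
  match goal with |- ?l <= _ => replace l with (N3
    (c 0%nat * (px (P 0%nat) - px (Rv 0%nat)) + c 1%nat * (px (P 1%nat) - px (Rv 1%nat)) +
     c 2%nat * (px (P 2%nat) - px (Rv 2%nat)) + c 3%nat * (px (P 3%nat) - px (Rv 3%nat)))
    (c 0%nat * (py (P 0%nat) - py (Rv 0%nat)) + c 1%nat * (py (P 1%nat) - py (Rv 1%nat)) +
     c 2%nat * (py (P 2%nat) - py (Rv 2%nat)) + c 3%nat * (py (P 3%nat) - py (Rv 3%nat)))
    (c 0%nat * (pz (P 0%nat) - pz (Rv 0%nat)) + c 1%nat * (pz (P 1%nat) - pz (Rv 1%nat)) +
     c 2%nat * (pz (P 2%nat) - pz (Rv 2%nat)) + c 3%nat * (pz (P 3%nat) - pz (Rv 3%nat)))) end.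
  - exact K.
  - f_equal; ring.
Qed.

Lemma perm_sum s (X : nat -> R) : perm4 s ->
  X (s 0%nat) + X (s 1%nat) + X (s 2%nat) + X (s 3%nat) = X 0%nat + X 1%nat + X 2%nat + X 3%nat.
Proof.
  intros [Hr Hi].
  assert (a01 : s 0%nat <> s 1%nat) by (intro E; apply Hi in E; lia).
  assert (a02 : s 0%nat <> s 2%nat) by (intro E; apply Hi in E; lia).
  assert (a03 : s 0%nat <> s 3%nat) by (intro E; apply Hi in E; lia).
  assert (a12 : s 1%nat <> s 2%nat) by (intro E; apply Hi in E; lia).
  assert (a13 : s 1%nat <> s 3%nat) by (intro E; apply Hi in E; lia).
  assert (a23 : s 2%nat <> s 3%nat) by (intro E; apply Hi in E; lia).
  pose proof (Hr 0%nat ltac:(lia)); pose proof (Hr 1%nat ltac:(lia));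
  pose proof (Hr 2%nat ltac:(lia)); pose proof (Hr 3%nat ltac:(lia)).
  destruct (s 0%nat) as [|[|[|[|]]]]; try lia;
  destruct (s 1%nat) as [|[|[|[|]]]]; try lia;
  destruct (s 2%nat) as [|[|[|[|]]]]; try lia;
  destruct (s 3%nat) as [|[|[|[|]]]]; try lia; lra.
Qed.

Definition indc (a j : nat) : R := if Nat.eq_dec a j then 1 else 0.

Lemma ind_sum a (X : nat -> R) : (a < 4)%nat ->
  indc a 0 * X 0%nat + indc a 1 * X 1%nat + indc a 2 * X 2%nat + indc a 3 * X 3%nat = X a.
Proof.
  intros Ha. unfold indc.
  destruct a as [|[|[|[|a]]]]; try lia; repeat (destruct (Nat.eq_dec _ _); try lia); lra.
Qed.

Definition lpush (s : nat -> nat) (l : nat -> R) (j : nat) : R :=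
  indc (s 0%nat) j * l 0%nat + indc (s 1%nat) j * l 1%nat + indc (s 2%nat) j * l 2%nat + indc (s 3%nat) j * l 3%nat.

Lemma lpush_sum s l (X : nat -> R) : (forall i, (i<4)%nat -> (s i < 4)%nat) ->
  lpush s l 0 * X 0%nat + lpush s l 1 * X 1%nat + lpush s l 2 * X 2%nat + lpush s l 3 * X 3%nat
  = l 0%nat * X (s 0%nat) + l 1%nat * X (s 1%nat) + l 2%nat * X (s 2%nat) + l 3%nat * X (s 3%nat).
Proof.
  intros Hs. unfold lpush.
  rewrite <- (ind_sum (s 0%nat) X), <- (ind_sum (s 1%nat) X), <- (ind_sum (s 2%nat) X),
    <- (ind_sum (s 3%nat) X) by (apply Hs; lia). ring.
Qed.

Lemma ind_nonneg a j : 0 <= indc a j.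
Proof. unfold indc; destruct (Nat.eq_dec a j); lra. Qed.

Lemma maxdev_bounds P Q s : 
  dist3 (P 0%nat) (Q (s 0%nat)) <= maxdev P Q s /\ dist3 (P 1%nat) (Q (s 1%nat)) <= maxdev P Q s /\
  dist3 (P 2%nat) (Q (s 2%nat)) <= maxdev P Q s /\ dist3 (P 3%nat) (Q (s 3%nat)) <= maxdev P Q s.
Proof.
  unfold maxdev.
  pose proof (Rmax_l (dist3 (P 0%nat) (Q (s 0%nat))) (dist3 (P 1%nat) (Q (s 1%nat)))).
  pose proof (Rmax_r (dist3 (P 0%nat) (Q (s 0%nat))) (dist3 (P 1%nat) (Q (s 1%nat)))).
  pose proof (Rmax_l (dist3 (P 2%nat) (Q (s 2%nat))) (dist3 (P 3%nat) (Q (s 3%nat)))).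
  pose proof (Rmax_r (dist3 (P 2%nat) (Q (s 2%nat))) (dist3 (P 3%nat) (Q (s 3%nat)))).
  pose proof (Rmax_l (Rmax (dist3 (P 0%nat) (Q (s 0%nat))) (dist3 (P 1%nat) (Q (s 1%nat))))
                     (Rmax (dist3 (P 2%nat) (Q (s 2%nat))) (dist3 (P 3%nat) (Q (s 3%nat))))).
  pose proof (Rmax_r (Rmax (dist3 (P 0%nat) (Q (s 0%nat))) (dist3 (P 1%nat) (Q (s 1%nat))))
                     (Rmax (dist3 (P 2%nat) (Q (s 2%nat))) (dist3 (P 3%nat) (Q (s 3%nat))))).
  repeat split; lra.
Qed.

Lemma part1_fwd P Q s a : perm4 s -> tetra P a ->
  exists b, tetra Q b /\ dist3 a b <= maxdev P Q s.
Proof.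
  intros Hs [l [Hl [H1 [Hx [Hy Hz]]]]].
  pose proof (proj1 Hs) as Hr.
  exists (l 0%nat * px (Q (s 0%nat)) + l 1%nat * px (Q (s 1%nat)) + l 2%nat * px (Q (s 2%nat)) + l 3%nat * px (Q (s 3%nat)),
          l 0%nat * py (Q (s 0%nat)) + l 1%nat * py (Q (s 1%nat)) + l 2%nat * py (Q (s 2%nat)) + l 3%nat * py (Q (s 3%nat)),
          l 0%nat * pz (Q (s 0%nat)) + l 1%nat * pz (Q (s 1%nat)) + l 2%nat * pz (Q (s 2%nat)) + l 3%nat * pz (Q (s 3%nat))).
  split.
  - exists (lpush s l). split; [| split; [| split; [|split]]].
    + intros i _. unfold lpush. pose proof (ind_nonneg (s 0%nat) i); pose proof (ind_nonneg (s 1%nat) i);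
      pose proof (ind_nonneg (s 2%nat) i); pose proof (ind_nonneg (s 3%nat) i).
      pose proof (Hl 0%nat ltac:(lia)); pose proof (Hl 1%nat ltac:(lia));
      pose proof (Hl 2%nat ltac:(lia)); pose proof (Hl 3%nat ltac:(lia)). nra.
    + pose proof (lpush_sum s l (fun _ => 1) Hr) as K. simpl in K. lra.
    + rewrite (lpush_sum s l (fun j => px (Q j)) Hr). reflexivity.
    + rewrite (lpush_sum s l (fun j => py (Q j)) Hr). reflexivity.
    + rewrite (lpush_sum s l (fun j => pz (Q j)) Hr). reflexivity.
  - eapply Rle_trans.
    + apply (conv_dist P (fun i => Q (s i)) l); auto.
    + destruct (maxdev_bounds P Q s) as [m0 [m1 [m2 m3]]].
      pose proof (Hl 0%nat ltac:(lia)); pose proof (Hl 1%nat ltac:(lia));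
      pose proof (Hl 2%nat ltac:(lia)); pose proof (Hl 3%nat ltac:(lia)).
      simpl. nra.
Qed.

Lemma part1_bwd P Q s b : perm4 s -> tetra Q b ->
  exists a, tetra P a /\ dist3 a b <= maxdev P Q s.
Proof.
  intros Hs [l [Hl [H1 [Hx [Hy Hz]]]]].
  pose proof (proj1 Hs) as Hr.
  set (c := fun i => l (s i)).
  exists (c 0%nat * px (P 0%nat) + c 1%nat * px (P 1%nat) + c 2%nat * px (P 2%nat) + c 3%nat * px (P 3%nat),
          c 0%nat * py (P 0%nat) + c 1%nat * py (P 1%nat) + c 2%nat * py (P 2%nat) + c 3%nat * py (P 3%nat),
          c 0%nat * pz (P 0%nat) + c 1%nat * pz (P 1%nat) + c 2%nat * pz (P 2%nat) + c 3%nat * pz (P 3%nat)).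
  assert (Hc : forall i, (i<4)%nat -> 0 <= c i) by (intros i Hi; apply Hl, Hr, Hi).
  split.
  - exists c. split; [exact Hc| split; [| repeat split]].
    unfold c. rewrite (perm_sum s l Hs). exact H1.
  - eapply Rle_trans.
    + apply (conv_dist P (fun i => Q (s i)) c); auto.
      * rewrite Hx. unfold c. rewrite <- (perm_sum s (fun j => l j * px (Q j)) Hs). reflexivity.
      * rewrite Hy. unfold c. rewrite <- (perm_sum s (fun j => l j * py (Q j)) Hs). reflexivity.
      * rewrite Hz. unfold c. rewrite <- (perm_sum s (fun j => l j * pz (Q j)) Hs). reflexivity.
    + destruct (maxdev_bounds P Q s) as [m0 [m1 [m2 m3]]].
      pose proof (Hc 0%nat ltac:(lia)); pose proof (Hc 1%nat ltac:(lia));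
      pose proof (Hc 2%nat ltac:(lia)); pose proof (Hc 3%nat ltac:(lia)).
      assert (c 0%nat + c 1%nat + c 2%nat + c 3%nat = 1) by (unfold c; rewrite (perm_sum s l Hs); exact H1).
      simpl. nra.
Qed.

Lemma dist3_refl p : dist3 p p = 0.
Proof. unfold dist3. replace ((px p - px p) ^ 2 + (py p - py p) ^ 2 + (pz p - pz p) ^ 2) with 0 by ring. apply sqrt_0. Qed.

Lemma dist3_sym p q : dist3 p q = dist3 q p.
Proof. unfold dist3. f_equal. ring. Qed.

Lemma dist3_norm p q : dist3 p q <= norm3 p + norm3 q.
Proof.
  rewrite dist3_N3.
  replace (norm3 q) with (Rabs (-1) * N3 (px q) (py q) (pz q)) by (assert (Rabs (-1) = 1) as E1 by (unfold Rabs; destruct (Rcase_abs (-1)); lra); rewrite E1; unfold N3, norm3; ring).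
  rewrite <- N3_scale.
  replace (N3 (px p - px q) (py p - py q) (pz p - pz q)) with
     (N3 (px p + -1 * px q) (py p + -1 * py q) (pz p + -1 * pz q)) by (f_equal; ring).
  apply N3_tri.
Qed.

Lemma tetra_vert P k : (k < 4)%nat -> tetra P (P k).
Proof.
  intros Hk. exists (indc k). split; [intros; apply ind_nonneg|].
  unfold indc; destruct k as [|[|[|[|k]]]]; try lia;
  repeat (destruct (Nat.eq_dec _ _); try lia); repeat split; ring.
Qed.

Lemma vertex_close P Q i t Bd : nondegenerate P -> (i < 4)%nat -> 0 <= t ->
  (forall k, (k < 4)%nat -> dist3 (P k) (P i) <= Bd) ->
  1 - 2*t <= bc P i Q -> (forall k, (k<4)%nat -> - t <= bc P k Q) ->
  dist3 (P i) Q <= 16 * t * Bd.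
Proof.
  intros HD Hi Ht HB Hci Hck.
  destruct (bc_recon P Q HD) as [Rx [Ry Rz]].
  pose proof (bc_sum P Q) as Hs.
  set (c := fun k => bc P k Q) in *.
  assert (Hterm : forall k, (k<4)%nat -> Rabs (c k) * dist3 (P k) (P i) <= 4*t*Bd).
  { intros k Hk. destruct (Nat.eq_dec k i) as [->|ne].
    - rewrite dist3_refl. pose proof (HB i Hi). rewrite dist3_refl in H. nra.
    - assert (Rabs (c k) <= 4*t).
      { apply Rabs_le. pose proof (Hck 0%nat ltac:(lia)); pose proof (Hck 1%nat ltac:(lia));
        pose proof (Hck 2%nat ltac:(lia)); pose proof (Hck 3%nat ltac:(lia)). unfold c; cbv beta.
        destruct k as [|[|[|[|k]]]]; try lia; destruct i as [|[|[|[|i]]]]; try lia; lra. }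
      apply Rmult_le_compat; auto using Rabs_pos, dist3_pos. }
  rewrite dist3_sym, dist3_N3.
  assert (Ex : px Q - px (P i) = c 0%nat * (px (P 0%nat) - px (P i)) + c 1%nat * (px (P 1%nat) - px (P i))
      + c 2%nat * (px (P 2%nat) - px (P i)) + c 3%nat * (px (P 3%nat) - px (P i))).
  { transitivity (c 0%nat * px (P 0%nat) + c 1%nat * px (P 1%nat) + c 2%nat * px (P 2%nat) + c 3%nat * px (P 3%nat)
      - (c 0%nat + c 1%nat + c 2%nat + c 3%nat) * px (P i)); [unfold c; cbv beta; rewrite Hs, <- Rx; ring | ring]. }
  assert (Ey : py Q - py (P i) = c 0%nat * (py (P 0%nat) - py (P i)) + c 1%nat * (py (P 1%nat) - py (P i))
      + c 2%nat * (py (P 2%nat) - py (P i)) + c 3%nat * (py (P 3%nat) - py (P i))).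
  { transitivity (c 0%nat * py (P 0%nat) + c 1%nat * py (P 1%nat) + c 2%nat * py (P 2%nat) + c 3%nat * py (P 3%nat)
      - (c 0%nat + c 1%nat + c 2%nat + c 3%nat) * py (P i)); [unfold c; cbv beta; rewrite Hs, <- Ry; ring | ring]. }
  assert (Ez : pz Q - pz (P i) = c 0%nat * (pz (P 0%nat) - pz (P i)) + c 1%nat * (pz (P 1%nat) - pz (P i))
      + c 2%nat * (pz (P 2%nat) - pz (P i)) + c 3%nat * (pz (P 3%nat) - pz (P i))).
  { transitivity (c 0%nat * pz (P 0%nat) + c 1%nat * pz (P 1%nat) + c 2%nat * pz (P 2%nat) + c 3%nat * pz (P 3%nat)
      - (c 0%nat + c 1%nat + c 2%nat + c 3%nat) * pz (P i)); [unfold c; cbv beta; rewrite Hs, <- Rz; ring | ring]. }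
  rewrite Ex, Ey, Ez.
  eapply Rle_trans.
  { apply (N3_sum4 c (fun k => px (P k) - px (P i)) (fun k => py (P k) - py (P i)) (fun k => pz (P k) - pz (P i))). }
  cbv beta. rewrite <- !dist3_N3.
  pose proof (Hterm 0%nat ltac:(lia)); pose proof (Hterm 1%nat ltac:(lia));
  pose proof (Hterm 2%nat ltac:(lia)); pose proof (Hterm 3%nat ltac:(lia)). lra.
Qed.

Lemma Rabs_le_between x y : Rabs x <= y -> - y <= x <= y.
Proof. unfold Rabs; destruct (Rcase_abs x); intros; lra. Qed.

Lemma pick_max (P Q : vertices) (mu : nat -> R) i b thr :
  nondegenerate P ->
  (forall j, (j<4)%nat -> 0 <= mu j) -> mu 0%nat + mu 1%nat + mu 2%nat + mu 3%nat = 1 ->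
  px b = mu 0%nat * px (Q 0%nat) + mu 1%nat * px (Q 1%nat) + mu 2%nat * px (Q 2%nat) + mu 3%nat * px (Q 3%nat) ->
  py b = mu 0%nat * py (Q 0%nat) + mu 1%nat * py (Q 1%nat) + mu 2%nat * py (Q 2%nat) + mu 3%nat * py (Q 3%nat) ->
  pz b = mu 0%nat * pz (Q 0%nat) + mu 1%nat * pz (Q 1%nat) + mu 2%nat * pz (Q 2%nat) + mu 3%nat * pz (Q 3%nat) ->
  thr < bc P i b ->
  exists j, (j < 4)%nat /\ thr <= bc P i (Q j).
Proof.
  intros HD Hm Hs Hx Hy Hz Hb.
  rewrite (bc_comb P Q mu b i HD Hs Hx Hy Hz) in Hb.
  destruct (Rle_dec thr (bc P i (Q 0%nat))). { exists 0%nat; split; [lia|auto]. }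
  destruct (Rle_dec thr (bc P i (Q 1%nat))). { exists 1%nat; split; [lia|auto]. }
  destruct (Rle_dec thr (bc P i (Q 2%nat))). { exists 2%nat; split; [lia|auto]. }
  destruct (Rle_dec thr (bc P i (Q 3%nat))). { exists 3%nat; split; [lia|auto]. }
  exfalso.
  pose proof (Rmult_le_compat_l (mu 0%nat) (bc P i (Q 0%nat)) thr (Hm 0%nat ltac:(lia)) ltac:(lra)).
  pose proof (Rmult_le_compat_l (mu 1%nat) (bc P i (Q 1%nat)) thr (Hm 1%nat ltac:(lia)) ltac:(lra)).
  pose proof (Rmult_le_compat_l (mu 2%nat) (bc P i (Q 2%nat)) thr (Hm 2%nat ltac:(lia)) ltac:(lra)).
  pose proof (Rmult_le_compat_l (mu 3%nat) (bc P i (Q 3%nat)) thr (Hm 3%nat ltac:(lia)) ltac:(lra)).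
  assert (mu 0%nat * thr + mu 1%nat * thr + mu 2%nat * thr + mu 3%nat * thr = thr) by
    (transitivity ((mu 0%nat + mu 1%nat + mu 2%nat + mu 3%nat) * thr); [ring | rewrite Hs; ring]).
  lra.
Qed.

Lemma no_double P Q i k t : (i<4)%nat -> (k<4)%nat -> i <> k -> t < 1/6 ->
  (forall l, (l<4)%nat -> - t <= bc P l Q) ->
  1 - 2*t <= bc P i Q -> 1 - 2*t <= bc P k Q -> False.
Proof.
  intros Hi Hk ne Ht Hl H1 H2. pose proof (bc_sum P Q).
  pose proof (Hl 0%nat ltac:(lia)); pose proof (Hl 1%nat ltac:(lia));
  pose proof (Hl 2%nat ltac:(lia)); pose proof (Hl 3%nat ltac:(lia)).
  destruct k as [|[|[|[|k]]]]; try lia; destruct i as [|[|[|[|i]]]]; try lia; lra.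
Qed.

Lemma part2_core P Q c rho Rad eps : nondegenerate P -> 0 < rho -> 0 < eps ->
  (forall z, dist3 z c <= rho -> tetra P z) ->
  (forall x, tetra P x -> norm3 x < Rad) ->
  (forall x, tetra Q x -> norm3 x < Rad) ->
  (forall a, tetra P a -> exists b, tetra Q b /\ dist3 a b <= eps) ->
  (forall b, tetra Q b -> exists a, tetra P a /\ dist3 a b <= eps) ->
  exists s, perm4 s /\ maxdev P Q s <= 16 * Rad * eps / rho.
Proof.
  intros HD Hr He Hball NP NQ H01 H10.
  set (t := eps / (2*rho)).
  assert (Ht : 0 < t) by (unfold t; apply Rdiv_lt_0_compat; lra).
  assert (Rt : 16 * Rad * eps / rho = 32 * t * Rad) by (unfold t; field; lra).
  rewrite Rt.
  assert (VP : forall k, (k<4)%nat -> norm3 (P k) < Rad) by (intros; apply NP, tetra_vert; auto).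
  assert (VQ : forall k, (k<4)%nat -> norm3 (Q k) < Rad) by (intros; apply NQ, tetra_vert; auto).
  assert (DPQ : forall i j, (i<4)%nat -> (j<4)%nat -> dist3 (P i) (Q j) < 2*Rad).
  { intros i j Hi Hj. pose proof (dist3_norm (P i) (Q j)). pose proof (VP i Hi); pose proof (VQ j Hj). lra. }
  assert (DPP : forall i j, (i<4)%nat -> (j<4)%nat -> dist3 (P i) (P j) <= 2*Rad).
  { intros i j Hi Hj. pose proof (dist3_norm (P i) (P j)). pose proof (VP i Hi); pose proof (VP j Hj). lra. }
  destruct (Rlt_dec t (1/6)) as [Hsmall|Hbig].
  2:{ exists (fun n => n). split.
      - split; auto.
      - unfold maxdev. pose proof (DPQ 0%nat 0%nat ltac:(lia) ltac:(lia)).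
        pose proof (DPQ 1%nat 1%nat ltac:(lia) ltac:(lia)).
        pose proof (DPQ 2%nat 2%nat ltac:(lia) ltac:(lia)).
        pose proof (DPQ 3%nat 3%nat ltac:(lia) ltac:(lia)).
        assert (2 * Rad <= 32 * t * Rad).
        { assert (0 < Rad) by (pose proof (VP 0%nat ltac:(lia)); unfold norm3 in *; pose proof (sqrt_pos (px (P 0%nat) ^ 2 + py (P 0%nat) ^ 2 + pz (P 0%nat) ^ 2)); lra). nra. }
        repeat apply Rmax_lub; lra. }
  assert (LB : forall i j, (i<4)%nat -> (j<4)%nat -> - t <= bc P i (Q j)).
  { intros i j Hi Hj. destruct (H10 (Q j) (tetra_vert Q j Hj)) as [a [Ha Hda]].
    pose proof (tetra_bc P a i HD Hi Ha).
    pose proof (bc_lip P c rho i a (Q j) HD Hi Hr Hball) as K.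
    apply Rabs_le_between in K.
    assert (dist3 a (Q j) / (2 * rho) <= t) by (unfold t; unfold Rdiv; apply Rmult_le_compat_r; [apply Rlt_le, Rinv_0_lt_compat; lra | auto]).
    lra. }
  assert (UB : forall i, (i<4)%nat -> exists j, (j<4)%nat /\ 1 - 2*t <= bc P i (Q j)).
  { intros i Hi. destruct (H01 (P i) (tetra_vert P i Hi)) as [b [[mu [Hm [Hs [Hx [Hy Hz]]]]] Hdb]].
    apply (pick_max P Q mu i b (1 - 2*t) HD Hm Hs Hx Hy Hz).
    pose proof (bc_lip P c rho i (P i) b HD Hi Hr Hball) as K.
    rewrite bc_vert in K by auto. destruct (Nat.eq_dec i i); [|congruence].
    apply Rabs_le_between in K.
    assert (dist3 (P i) b / (2 * rho) <= t) by (unfold t; unfold Rdiv; apply Rmult_le_compat_r; [apply Rlt_le, Rinv_0_lt_compat; lra | auto]).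
    lra. }
  destruct (UB 0%nat ltac:(lia)) as [j0 [Hj0 B0]].
  destruct (UB 1%nat ltac:(lia)) as [j1 [Hj1 B1]].
  destruct (UB 2%nat ltac:(lia)) as [j2 [Hj2 B2]].
  destruct (UB 3%nat ltac:(lia)) as [j3 [Hj3 B3]].
  set (s := fun n => match n with 0%nat => j0 | 1%nat => j1 | 2%nat => j2 | _ => j3 end).
  assert (Bs : forall i, (i<4)%nat -> 1 - 2*t <= bc P i (Q (s i))).
  { intros i Hi. destruct i as [|[|[|[|i]]]]; try lia; simpl; auto. }
  assert (Rs : forall i, (i<4)%nat -> (s i < 4)%nat).
  { intros i Hi. destruct i as [|[|[|[|i]]]]; try lia; simpl; auto. }
  exists s. split.
  - split; auto. intros i k Hi Hk E.
    destruct (Nat.eq_dec i k) as [|ne]; auto. exfalso.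
    apply (no_double P (Q (s i)) i k t Hi Hk ne Hsmall).
    + intros l Hl. apply LB; auto.
    + apply Bs; auto.
    + rewrite E. apply Bs; auto.
  - assert (Hv : forall i, (i<4)%nat -> dist3 (P i) (Q (s i)) <= 32 * t * Rad).
    { intros i Hi. replace (32 * t * Rad) with (16 * t * (2 * Rad)) by ring.
      apply vertex_close; auto; try lra; intros k Hk; first [apply DPP | apply LB]; auto. }
    unfold maxdev. pose proof (Hv 0%nat ltac:(lia)); pose proof (Hv 1%nat ltac:(lia));
    pose proof (Hv 2%nat ltac:(lia)); pose proof (Hv 3%nat ltac:(lia)).
    repeat apply Rmax_lub; lra.
Qed.

Lemma haus_nonneg A0 B0 d : is_hausdorff_dist A0 B0 d -> 0 <= d.
Proof. intros [_ H]. apply H. intros x [Hx _]. exact Hx. Qed.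

Lemma haus_eps A0 B0 d eps : is_hausdorff_dist A0 B0 d -> d < eps ->
  (forall a, A0 a -> exists b, B0 b /\ dist3 a b <= eps) /\
  (forall b, B0 b -> exists a, A0 a /\ dist3 a b <= eps).
Proof.
  intros [H1 H2] Hd.
  destruct (classic (exists e, (0 <= e /\
            (forall a, A0 a -> exists b, B0 b /\ dist3 a b <= e) /\
            (forall b, B0 b -> exists a, A0 a /\ dist3 a b <= e)) /\ e < eps)) as [[e [[_ [Ha Hb]] He]]|N].
  - split.
    + intros a Ha0. destruct (Ha a Ha0) as [b [? ?]]. exists b; split; auto; lra.
    + intros b Hb0. destruct (Hb b Hb0) as [a [? ?]]. exists a; split; auto; lra.
  - exfalso. assert (eps <= d); [|lra]. apply H2. intros x Hx.
    destruct (Rle_dec eps x); auto. exfalso. apply N. exists x. split; auto. lra.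
Qed.

Lemma le_eps m A d : 0 < A -> (forall eps, d < eps -> m <= A * eps) -> m <= A * d.
Proof.
  intros HA H. destruct (Rle_dec m (A*d)) as [|n]; auto. exfalso.
  set (e := (d + m / A) / 2).
  assert (d < e). { unfold e. assert (d < m / A). { apply (Rmult_lt_reg_l A); auto. field_simplify; lra. } lra. }
  pose proof (H e H0). unfold e in H1.
  assert (A * ((d + m / A) / 2) = (A * d + m) / 2) by (field; lra). lra.
Qed.

Lemma maxdev_nonneg P Q s : 0 <= maxdev P Q s.
Proof. destruct (maxdev_bounds P Q s) as [H _]. pose proof (dist3_pos (P 0%nat) (Q (s 0%nat))). lra. Qed.

Theorem mainTheorem5 :
  (forall (P0 P1 : vertices) (d m : R),
      nondegenerate P0 -> nondegenerate P1 ->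
      is_hausdorff_dist (tetra P0) (tetra P1) d ->
      is_vertex_match_dist P0 P1 m ->
      d <= m) /\
  (forall Rad r1 : R, 0 < r1 ->
     exists A1 : R, 0 < A1 /\
       forall (P0 P1 : vertices) (d m : R),
         nondegenerate P0 -> nondegenerate P1 ->
         (forall x, tetra P0 x -> norm3 x < Rad) ->
         (forall x, tetra P1 x -> norm3 x < Rad) ->
         (exists rho, is_inradius (tetra P0) rho /\ r1 < rho) ->
         (exists rho, is_inradius (tetra P1) rho /\ r1 < rho) ->
         is_hausdorff_dist (tetra P0) (tetra P1) d ->
         is_vertex_match_dist P0 P1 m ->
         m <= A1 * d).
Proof.
  split.
  - intros P0 P1 d m _ _ H [[s [Hs Hms]] _].
    apply (proj1 H). rewrite <- Hms. split; [apply maxdev_nonneg|split].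
    + intros a Ha. apply part1_fwd; auto.
    + intros b Hb. apply part1_bwd; auto.
  - intros Rad r1 Hr1.
    assert (HM : 0 < Rmax Rad 1) by (pose proof (Rmax_r Rad 1); lra).
    exists (16 * Rmax Rad 1 / r1). split.
    { apply Rdiv_lt_0_compat; lra. }
    intros P0 P1 d m HD0 HD1 N0 N1 [rho0 [[Hub Hlub] Hrho0]] _ Hh [_ Hm].
    assert (Hex : exists rho, (0 <= rho /\ exists c : pt, forall x, dist3 x c <= rho -> tetra P0 x) /\ r1 < rho).
    { apply NNPP. intro N. assert (rho0 <= r1); [|lra]. apply Hlub. intros x Hx.
      destruct (Rle_dec x r1); auto. exfalso. apply N. exists x. split; auto. lra. }
    destruct Hex as [rho [[_ [c Hc]] Hr]].
    assert (HRad : 0 < Rad).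
    { pose proof (N0 (P0 0%nat) (tetra_vert P0 0 ltac:(lia))). unfold norm3 in H.
      pose proof (sqrt_pos (px (P0 0%nat) ^ 2 + py (P0 0%nat) ^ 2 + pz (P0 0%nat) ^ 2)). lra. }
    apply le_eps. { apply Rdiv_lt_0_compat; lra. }
    intros eps He.
    pose proof (haus_nonneg _ _ _ Hh).
    destruct (haus_eps _ _ _ eps Hh He) as [H01 H10].
    destruct (part2_core P0 P1 c rho Rad eps HD0 ltac:(lra) ltac:(lra) Hc N0 N1 H01 H10) as [s [Hs Hle]].
    pose proof (Hm s Hs).
    assert (16 * Rad * eps / rho <= 16 * Rmax Rad 1 / r1 * eps); [|lra].
    pose proof (Rmax_l Rad 1).
    apply Rle_trans with (16 * Rad * eps / r1).
    + unfold Rdiv. apply Rmult_le_compat_l; [nra|]. apply Rinv_le_contravar; lra.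
    + unfold Rdiv. assert (0 < / r1) by (apply Rinv_0_lt_compat; lra).
      replace (16 * Rmax Rad 1 * / r1 * eps) with (16 * Rmax Rad 1 * eps * / r1) by ring.
      apply Rmult_le_compat_r; [lra|]. apply Rmult_le_compat_r; lra.
Qed.
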